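(* For every integer $l\ge -1$ and every integer $n\ge1$, the subset $S'_{l,l+n}=\mu(S_l\cap S_{l+n})\subset M$ is an invariant submanifold of the KP equations $\partial_{t_j}h=\partial_xH^{(j)}$, $j\ge1$ (i.e. all KP flows are tangent to it).
   Context: Let $x$ be a space variable; all coefficients below are functions of $x$, and a subscript $x$ denotes $\partial_x$. Let $M$ be the affine space of formal Laurent series $h(z)=z+\sum_{j\ge1}h_j z^{-j}$, $A$ the affine space of formal Laurent series $a(z)=z+\sum_{j\ge0}a_j z^{-j}$, and $N=M\times A$. The Faà di Bruno iterates of $h$ are $h^{(0)}=1$, $h^{(j+1)}=(\partial_x+h)h^{(j)}=\partial_x h^{(j)}+h\,h^{(j)}$ for $j\ge0$. For $j\ge0$, the KP current $H^{(j)}$ is the unique Laurent series of the form $H^{(j)}=h^{(j)}+\sum_{l=0}^{j-2}p^j_l[h]\,h^{(l)}$, with the $p^j_l[h]$ differential polynomials in the $h_i$ (independent of $z$), such that $H^{(j)}=z^j+O(z^{-1})$ as $z\to\infty$. The KP equations are $\partial_{t_j}h=\partial_x H^{(j)}$. The maps $\mu,\sigma:N\to M$ are $\mu(h,a)=h$ and $\sigma(h,a)=h+a_x/a$. The DKP equations on $N$ are $\partial_{t_j}h=\partial_xH^{(j)}$, $\partial_{t_j}a=a(\tilde H^{(j)}-H^{(j)})$, where $\tilde H^{(j)}$ is $H^{(j)}$ evaluated at $\sigma(h,a)$. For an integer $l\ge-1$, $S_l\subset N$ is the set of pairs $(h,a)$ satisfying $z^l a=H^{(l+1)}+\sum_{m=0}^{l}a_mH^{(l-m)}$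 (for $l=-1$ the sum is empty, so $S_{-1}=\{a=z\}$). It is known that every DKP vector field is tangent to every $S_l$. *)

(* Defs.v *)
From HB Require Import structures.
From mathcomp Require Import all_boot all_order all_algebra.
Set Implicit Arguments. Unset Strict Implicit. Unset Printing Implicit Defensive.
Import Order.TTheory GRing.Theory Num.Theory.
Local Open Scope ring_scope.

(* Formal Laurent series in z (with finitely many positive powers) over a
   commutative ring R equipped with a map D (the derivation d/dx).
   A series is given by an upper bound [ls_top] on its degree and a
   coefficient function; coefficients above [ls_top] are ignored. *)
Section LaurentSeries.
Variables (R : comNzRingType) (D : R -> R).

Record LS := mkLS { ls_top : int; ls_co : int -> R }.

Definition coef (f : LS) (k : int) : R :=
  if k <= ls_top f then ls_co f k else 0.

Definition ls_eq (f g : LS) : Prop := forall k : int, coef f k = coef g k.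

Definition ls_zero : LS := mkLS 0 (fun _ => 0).
Definition lsZ (m : int) : LS := mkLS m (fun k => (k == m)%:R).
Definition ls_add (f g : LS) : LS :=
  mkLS (Num.max (ls_top f) (ls_top g)) (fun k => coef f k + coef g k).
Definition ls_scale (c : R) (f : LS) : LS :=
  mkLS (ls_top f) (fun k => c * coef f k).
Definition ls_sub (f g : LS) : LS := ls_add f (ls_scale (-1) g).
Definition ls_mul (f g : LS) : LS :=
  mkLS (ls_top f + ls_top g)
    (fun k => \sum_(i < (absz (ls_top f + ls_top g - k)%R).+1)
                 coef f (ls_top f - i%:Z) * coef g (k - ls_top f + i%:Z)).
Definition ls_der (f : LS) : LS := mkLS (ls_top f) (fun k => D (coef f k)).

(* h = z + sum_{j>=1} h_j z^{-j}, encoded by u with u i = h_{i+1} *)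
Definition hser (u : nat -> R) : LS :=
  mkLS 1 (fun k => if k == 1 then 1
                   else if k <= -1 then u (absz (- k)).-1 else 0).
(* a = z + sum_{j>=0} a_j z^{-j}, encoded by a with a j = a_j *)
Definition aser (a : nat -> R) : LS :=
  mkLS 1 (fun k => if k == 1 then 1 else if k <= 0 then a (absz (- k)) else 0).

Fixpoint fdb (u : nat -> R) (j : nat) : LS :=
  match j with
  | 0 => lsZ 0
  | j'.+1 => ls_add (ls_der (fdb u j')) (ls_mul (hser u) (fdb u j'))
  end.

(* Triangular reduction: successively kills the coefficients of
   z^(l-1), ..., z^0 by subtracting multiples of h^(l-1), ..., h^(0). *)
Fixpoint kpred (u : nat -> R) (F : LS) (l : nat) : LS :=
  match l with
  | 0 => F
  | l'.+1 => kpred u (ls_sub F (ls_scale (coef F l'%:Z) (fdb u l'))) l'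
  end.

(* KP current H^(j): the unique h^(j) + sum_{l<=j-2} p_l h^(l)
   with H^(j) = z^j + O(z^{-1}) *)
Definition KPcur (u : nat -> R) (j : nat) : LS := kpred u (fdb u j) j.

(* The KP vector field d/dt_j h = d/dx H^(j), as coefficients:
   i-th component = coefficient of z^{-(i+1)} *)
Definition KPvec (u : nat -> R) (j : nat) : nat -> R :=
  fun i => coef (ls_der (KPcur u j)) (- (i.+1)%:Z).

(* The two sides of the defining equation of S_l:
   z^l a = H^(l+1) + sum_{m=0}^{l} a_m H^(l-m) *)
Definition S_lhs (l : int) (a : nat -> R) : LS := ls_mul (lsZ l) (aser a).
Definition S_rhs (l : int) (u : nat -> R) (a : nat -> R) : LS :=
  let k := absz (l + 1) in
  ls_add (KPcur u k)
         (\big[ls_add/ls_zero]_(m < k) ls_scale (a m) (KPcur u (k.-1 - m))).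

Definition in_S (l : int) (u a : nat -> R) : Prop := ls_eq (S_lhs l a) (S_rhs l u a).

Definition in_Sp (l : int) (n : nat) (u : nat -> R) : Prop :=
  exists a : nat -> R, in_S l u a /\ in_S (l + n%:Z) u a.

End LaurentSeries.

Definition ls_eq2 (R : comNzRingType) (f g : LS {poly R}) : Prop :=
  forall (k : int) (i : nat), (i < 2)%N -> (coef f k)`_i = (coef g k)`_i.

(* First-order (dual-number) tangency: the KP vector field X_j at h is
   tangent to S'_{l,l+n} at h iff h + t X_j(h) lifts, modulo t^2, to a point
   of S_l cap S_{l+n} (over R[t]/(t^2), with d/dx extended coefficientwise). *)
Definition KP_tangent (R : comNzRingType) (D : R -> R) (l : int) (n : nat)
    (j : nat) (u : nat -> R) : Prop :=
  exists aT : nat -> {poly R},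
    let hT := fun i => (u i)%:P + (KPvec D u j i)%:P * 'X in
    ls_eq2 (S_lhs l aT) (S_rhs (map_poly D) l hT aT) /\
    ls_eq2 (S_lhs (l + n%:Z) aT) (S_rhs (map_poly D) (l + n%:Z) hT aT).

(* Main.v *)
Require Import Defs.
From HB Require Import structures.
From mathcomp Require Import all_boot all_order all_algebra.
From mathcomp Require Import boolp.
From mathcomp Require Import zify ring.
From Stdlib Require Import ProofIrrelevance.
Set Implicit Arguments. Unset Strict Implicit. Unset Printing Implicit Defensive.
Import Order.TTheory GRing.Theory Num.Theory.
Local Open Scope ring_scope.

Definition conv (K : comNzRingType) (f g : int -> K) (T S k : int) : K :=
  if k <= T + S then \sum_(i < (absz ((T + S - k)%R)%R).+1) f (T - i%:Z) * g (k - T + i%:Z) else 0.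

Definition vanish (K : nmodType) (f : int -> K) (T : int) := forall k, T < k -> f k = 0.

Lemma vanish_mono (K : nmodType) (f : int -> K) T T' : vanish f T -> T <= T' -> vanish f T'.
Proof. move=> H le k lk; apply: H; lia. Qed.

Lemma convT1 (K : comNzRingType) (f g : int -> K) T S k :
  vanish f T -> conv f g (T + 1) S k = conv f g T S k.
Proof.
move=> vf; rewrite /conv.
have [k1|k1] := boolP (k <= T + S).
  have -> : k <= T + 1 + S by lia.
  have -> : absz ((T + 1 + S - k)%R) = (absz ((T + S - k)%R)).+1 by lia.
  rewrite big_ord_recl vf ?mul0r ?add0r; last by rewrite /=; lia.
  apply: eq_bigr => i _; rewrite /bump /=.
  have -> : bump 0 i = i.+1 by []. congr (f _ * g _); lia.
case: ifP => // k2.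
have -> : absz ((T + 1 + S - k)%R) = 0%N by lia.
rewrite big_ord1 vf ?mul0r //=; lia.
Qed.

Lemma convS1 (K : comNzRingType) (f g : int -> K) T S k :
  vanish g S -> conv f g T (S + 1) k = conv f g T S k.
Proof.
move=> vg; rewrite /conv.
have [k1|k1] := boolP (k <= T + S).
  have -> : k <= T + (S + 1) by lia.
  have -> : absz ((T + (S + 1) - k)%R) = (absz ((T + S - k)%R)).+1 by lia.
  rewrite big_ord_recr /= vg ?mulr0 ?addr0; last by lia.
  by apply: eq_bigr => i _.
case: ifP => // k2.
have -> : absz ((T + (S + 1) - k)%R) = 0%N by lia.
rewrite big_ord1 vg ?mulr0 //=; lia.
Qed.

Lemma convTd (K : comNzRingType) (f g : int -> K) T S k (d : nat) :
  vanish f T -> conv f g (T + d%:Z) S k = conv f g T S k.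
Proof.
move=> vf; elim: d => [|d IH]; first by rewrite addr0.
have -> : T + d.+1%:Z = (T + d%:Z) + 1 by lia.
rewrite convT1 ?IH //; apply: (vanish_mono vf); lia.
Qed.

Lemma convSd (K : comNzRingType) (f g : int -> K) T S k (d : nat) :
  vanish g S -> conv f g T (S + d%:Z) k = conv f g T S k.
Proof.
move=> vg; elim: d => [|d IH]; first by rewrite addr0.
have -> : S + d.+1%:Z = (S + d%:Z) + 1 by lia.
rewrite convS1 ?IH //; apply: (vanish_mono vg); lia.
Qed.

Lemma conv_ext (K : comNzRingType) (f g : int -> K) T S T' S' k :
  vanish f T -> vanish g S -> vanish f T' -> vanish g S' ->
  conv f g T S k = conv f g T' S' k.
Proof.
move=> v1 v2 v3 v4.
have eT : forall A B, vanish f A -> vanish f B -> forall C, conv f g A C k = conv f g B C k.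
  move=> A B vA vB C.
  have [AB|AB] := leP A B.
    have -> : B = A + (absz ((B - A)%R))%:Z by lia. by rewrite convTd.
  have -> : A = B + (absz ((A - B)%R))%:Z by lia. by rewrite convTd.
have eS : forall A B, vanish g A -> vanish g B -> forall C, conv f g C A k = conv f g C B k.
  move=> A B vA vB C.
  have [AB|AB] := leP A B.
    have -> : B = A + (absz ((B - A)%R))%:Z by lia. by rewrite convSd.
  have -> : A = B + (absz ((A - B)%R))%:Z by lia. by rewrite convSd.
by rewrite (eT T T') // (eS S S').
Qed.

Lemma conv_out (K : comNzRingType) (f g : int -> K) T S k :
  T + S < k -> conv f g T S k = 0.
Proof. by rewrite /conv => h; case: ifP => //; lia. Qed.

Definition tr (K : comNzRingType) (f : int -> K) (T : int) (M : nat) : {poly K} :=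
  \poly_(i < M) f (T - i%:Z).

Lemma coef_tr (K : comNzRingType) (f : int -> K) T M j :
  (tr f T M)`_j = if (j < M)%N then f (T - j%:Z) else 0.
Proof. by rewrite /tr coef_poly. Qed.

Lemma tr_mul (K : comNzRingType) (f g : int -> K) T S M (i : nat) :
  (i < M)%N -> (tr f T M * tr g S M)`_i = conv f g T S (T + S - i%:Z).
Proof.
move=> iM; rewrite coefM /conv.
have -> : T + S - i%:Z <= T + S by lia.
have -> : absz ((T + S - (T + S - i%:Z))%R) = i by lia.
apply: eq_bigr => j _; rewrite /tr !coef_poly.
have jM : (j < M)%N by have := ltn_ord j; lia.
have ijM : (i - j < M)%N by lia.
rewrite jM ijM; congr (_ * g _).
have := ltn_ord j; lia.
Qed.

Lemma coefM_eq (K : comNzRingType) (P Q R : {poly K}) (i : nat) :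
  (forall j, (j <= i)%N -> P`_j = Q`_j) -> (P * R)`_i = (Q * R)`_i.
Proof.
move=> H; rewrite !coefM; apply: eq_bigr => j _; rewrite H //.
by have := ltn_ord j; lia.
Qed.

Definition bnd (K : nmodType) (f : int -> K) : Prop := exists T : int, vanish f T.
Record ser (K : comNzRingType) := Ser { sf : int -> K; sfP : bnd sf }.
HB.instance Definition _ K := gen_eqMixin (ser K).
HB.instance Definition _ K := gen_choiceMixin (ser K).

Lemma ser_ext (K : comNzRingType) (f g : ser K) : (forall k, sf f k = sf g k) -> f = g.
Proof.
case: f g => f pf [g pg] /= H.
have e : f = g by apply: functional_extensionality_dep.
subst g; congr Ser; apply: proof_irrelevance.
Qed.

Definition stop (K : comNzRingType) (f : ser K) : int :=
  proj1_sig (cid (sfP f)).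
Lemma stopP (K : comNzRingType) (f : ser K) : vanish (sf f) (stop f).
Proof. rewrite /stop; by case: (cid _). Qed.
Arguments stopP {K} f.

Lemma bnd0 (K : comNzRingType) : bnd (fun _ : int => (0 : K)).
Proof. by exists 0. Qed.
Definition szero (K : comNzRingType) : ser K := Ser (@bnd0 K).
Lemma bnd_add (K : comNzRingType) (f g : ser K) : bnd (fun k => sf f k + sf g k).
Proof.
exists (Num.max (stop f) (stop g)) => k lk.
rewrite (stopP f) ?(stopP g) ?addr0 //; move: lk; rewrite gt_max => /andP[] //.
Qed.
Definition sadd (K : comNzRingType) (f g : ser K) : ser K := Ser (bnd_add f g).
Lemma bnd_opp (K : comNzRingType) (f : ser K) : bnd (fun k => - sf f k).
Proof. exists (stop f) => k lk; by rewrite stopP ?oppr0. Qed.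
Definition sopp (K : comNzRingType) (f : ser K) : ser K := Ser (bnd_opp f).

Lemma bnd_zc (K : comNzRingType) (c : K) (m : int) : bnd (fun k => if k == m then c else 0).
Proof. exists m => k lk; case: ifP => // /eqP; lia. Qed.
Definition zc (K : comNzRingType) (c : K) (m : int) : ser K := Ser (bnd_zc c m).
Definition sone (K : comNzRingType) : ser K := zc 1 0.

Lemma bnd_mul (K : comNzRingType) (f g : ser K) :
  bnd (fun k => conv (sf f) (sf g) (stop f) (stop g) k).
Proof. exists (stop f + stop g) => k lk; exact: conv_out. Qed.
Definition smul (K : comNzRingType) (f g : ser K) : ser K := Ser (bnd_mul f g).

Lemma smulE (K : comNzRingType) (f g : ser K) T S k :
  vanish (sf f) T -> vanish (sf g) S -> sf (smul f g) k = conv (sf f) (sf g) T S k.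
Proof. by move=> vf vg /=; apply: conv_ext => //; apply: stopP. Qed.

Lemma sf_sadd (K : comNzRingType) (f g : ser K) k : sf (sadd f g) k = sf f k + sf g k.
Proof. by []. Qed.

Lemma saddA (K : comNzRingType) : associative (@sadd K).
Proof. by move=> f g h; apply: ser_ext => k /=; rewrite addrA. Qed.
Lemma saddC (K : comNzRingType) : commutative (@sadd K).
Proof. by move=> f g; apply: ser_ext => k /=; rewrite addrC. Qed.
Lemma sadd0 (K : comNzRingType) : left_id (@szero K) (@sadd K).
Proof. by move=> f; apply: ser_ext => k /=; rewrite add0r. Qed.
Lemma saddN (K : comNzRingType) : left_inverse (@szero K) (@sopp K) (@sadd K).
Proof. by move=> f; apply: ser_ext => k /=; rewrite addNr. Qed.

HB.instance Definition _ K := GRing.isZmodule.Build (ser K) (@saddA K) (@saddC K) (@sadd0 K) (@saddN K).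

Lemma conv_poly (K : comNzRingType) (f g : int -> K) T S k M :
  k <= T + S -> (absz ((T + S - k)%R) < M)%N ->
  conv f g T S k = (tr f T M * tr g S M)`_(absz ((T + S - k)%R)).
Proof.
move=> kTS lt; rewrite tr_mul //; congr conv; lia.
Qed.

Lemma smulC (K : comNzRingType) : commutative (@smul K).
Proof.
move=> f g; apply: ser_ext => k.
rewrite (smulE k (stopP f) (stopP g)) (smulE k (stopP g) (stopP f)).
have [kk|kk] := boolP (k <= stop f + stop g); last first.
  by rewrite !conv_out //; lia.
rewrite (@conv_poly _ (sf f) (sf g) (stop f) (stop g) k (absz ((stop f + stop g - k)%R)).+1); try lia.
rewrite (@conv_poly _ (sf g) (sf f) (stop g) (stop f) k (absz ((stop f + stop g - k)%R)).+1); try lia.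
by rewrite mulrC [stop g + _]addrC.
Qed.

Lemma vanish_mul (K : comNzRingType) (f g : ser K) T S :
  vanish (sf f) T -> vanish (sf g) S -> vanish (sf (smul f g)) (T + S).
Proof. by move=> vf vg k lk; rewrite (smulE k vf vg) conv_out. Qed.

Lemma smulA (K : comNzRingType) : associative (@smul K).
Proof.
move=> f g h; apply: ser_ext => k.
set Tf := stop f; set Tg := stop g; set Th := stop h.
have vf := stopP f; have vg := stopP g; have vh := stopP h.
rewrite (smulE k vf (vanish_mul vg vh)) (smulE k (vanish_mul vf vg) vh).
have [kk|kk] := boolP (k <= Tf + Tg + Th); last first.
  by rewrite !conv_out //; lia.
set i := absz ((Tf + Tg + Th - k)%R).
rewrite (@conv_poly _ _ _ _ _ _ i.+1); last 2 first. lia. lia.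
rewrite (@conv_poly _ _ _ (Tf + Tg) _ _ i.+1); last 2 first. lia. lia.
have -> : absz ((Tf + (Tg + Th) - k)%R) = i by lia.
have -> : absz ((Tf + Tg + Th - k)%R) = i by [].
rewrite mulrC [LHS](@coefM_eq _ _ (tr (sf g) Tg i.+1 * tr (sf h) Th i.+1)); last first.
  move=> j ji; rewrite coef_tr ltnS ji (smulE _ vg vh) tr_mul; last by lia.
  by congr conv; lia.
rewrite [RHS](@coefM_eq _ _ (tr (sf f) Tf i.+1 * tr (sf g) Tg i.+1)); last first.
  move=> j ji; rewrite coef_tr ltnS ji (smulE _ vf vg) tr_mul; last by lia.
  by congr conv; lia.
by rewrite mulrC -mulrA.
Qed.

Lemma conv_addl (K : comNzRingType) (f g h : int -> K) T S k :
  conv (fun x => f x + g x) h T S k = conv f h T S k + conv g h T S k.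
Proof.
rewrite /conv; case: ifP => _; last by rewrite addr0.
by rewrite -big_split; apply: eq_bigr => i _; rewrite mulrDl.
Qed.

Lemma smulDl (K : comNzRingType) : left_distributive (@smul K) (@sadd K).
Proof.
move=> f g h; apply: ser_ext => k.
set T := Num.max (stop f) (stop g).
have vf : vanish (sf f) T by apply: (vanish_mono (stopP f)); rewrite le_max lexx.
have vg : vanish (sf g) T by apply: (vanish_mono (stopP g)); rewrite le_max lexx orbT.
have vfg : vanish (sf (sadd f g)) T by move=> x lx /=; rewrite vf ?vg ?addr0.
rewrite [LHS](smulE k vfg (stopP h)) sf_sadd (smulE k vf (stopP h)) (smulE k vg (stopP h)) -conv_addl.
by [].
Qed.

Lemma conv_zc (K : comNzRingType) (c : K) m (f : int -> K) T k :
  vanish f T -> conv (fun x => if x == m then c else 0) f m T k = c * f (k - m).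
Proof.
move=> vf; rewrite /conv; case: ifP => kk; last by rewrite vf ?mulr0 //; lia.
rewrite big_ord_recl /= subr0 eqxx addr0 big1 ?addr0 //.
move=> i _; case: ifP; last by rewrite mul0r.
move/eqP; rewrite /bump /=; lia.
Qed.

Lemma zcM (K : comNzRingType) (c : K) m (f : ser K) k :
  sf (smul (zc c m) f) k = c * sf f (k - m).
Proof.
have vz : vanish (sf (zc c m)) m by move=> x lx /=; case: ifP => // /eqP; lia.
by rewrite (smulE k vz (stopP f)) (conv_zc _ _ _ (stopP f)).
Qed.

Lemma smul1 (K : comNzRingType) : left_id (@sone K) (@smul K).
Proof. by move=> f; apply: ser_ext => k; rewrite zcM mul1r subr0. Qed.

Lemma sone_neq0 (K : comNzRingType) : (@sone K) != (@szero K).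
Proof.
apply/eqP => e; have := congr1 (fun f => sf f 0) e => /=.
by move/eqP; rewrite oner_eq0.
Qed.

HB.instance Definition _ K := GRing.Zmodule_isComNzRing.Build (ser K)
  (@smulA K) (@smulC K) (@smul1 K) (@smulDl K) (@sone_neq0 K).



Lemma sfD (K : comNzRingType) (f g : ser K) k : sf (f + g) k = sf f k + sf g k.
Proof. by []. Qed.
Lemma sfN (K : comNzRingType) (f : ser K) k : sf (- f) k = - sf f k.
Proof. by []. Qed.
Lemma sfB (K : comNzRingType) (f g : ser K) k : sf (f - g) k = sf f k - sf g k.
Proof. by []. Qed.
Lemma sf0 (K : comNzRingType) k : sf (0 : ser K) k = 0.
Proof. by []. Qed.
Lemma sf_sum (K : comNzRingType) (N : nat) (F : 'I_N -> ser K) k :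
  sf (\sum_(i < N) F i) k = \sum_(i < N) sf (F i) k.
Proof.
exact: (big_morph (fun f : ser K => sf f k) (fun x y => sfD x y k) (sf0 K k)).
Qed.
Lemma sfM (K : comNzRingType) (f g : ser K) T S k :
  vanish (sf f) T -> vanish (sf g) S -> sf (f * g) k = conv (sf f) (sf g) T S k.
Proof. exact: smulE. Qed.
Lemma vanishM (K : comNzRingType) (f g : ser K) T S :
  vanish (sf f) T -> vanish (sf g) S -> vanish (sf (f * g)) (T + S).
Proof. exact: vanish_mul. Qed.
Lemma sf_topM (K : comNzRingType) (f g : ser K) T S :
  vanish (sf f) T -> vanish (sf g) S -> sf (f * g) (T + S) = sf f T * sf g S.
Proof.
move=> vf vg; rewrite (sfM _ vf vg) /conv lexx.
have -> : absz ((T + S - (T + S))%R) = 0%N by lia.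
by rewrite big_ord1 /= subr0; congr (_ * sf g _); lia.
Qed.

Definition cst (K : comNzRingType) (c : K) : ser K := zc c 0.
Definition zS (K : comNzRingType) (m : int) : ser K := zc 1 m.

Lemma sf_zcM (K : comNzRingType) (c : K) m (f : ser K) k :
  sf (zc c m * f) k = c * sf f (k - m).
Proof. exact: zcM. Qed.
Lemma sf_cstM (K : comNzRingType) (c : K) (f : ser K) k : sf (cst c * f) k = c * sf f k.
Proof. by rewrite sf_zcM subr0. Qed.
Lemma sf_zSM (K : comNzRingType) m (f : ser K) k : sf (zS K m * f) k = sf f (k - m).
Proof. by rewrite sf_zcM mul1r. Qed.
Lemma sf_cst (K : comNzRingType) (c : K) k : sf (cst c) k = if k == 0 then c else 0.
Proof. by []. Qed.
Lemma sf_one (K : comNzRingType) k : sf (1 : ser K) k = if k == 0 then 1 else 0.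
Proof. by []. Qed.

Lemma cstD (K : comNzRingType) (a b : K) : cst (a + b) = cst a + cst b.
Proof. apply: ser_ext => k; rewrite sfD !sf_cst; case: ifP => //; by rewrite addr0. Qed.
Lemma cstN (K : comNzRingType) (a : K) : cst (- a) = - cst a.
Proof. apply: ser_ext => k; rewrite sfN !sf_cst; case: ifP => //; by rewrite oppr0. Qed.
Lemma cstB (K : comNzRingType) (a b : K) : cst (a - b) = cst a - cst b.
Proof. by rewrite cstD cstN. Qed.
Lemma cstM (K : comNzRingType) (a b : K) : cst (a * b) = cst a * cst b.
Proof. apply: ser_ext => k; rewrite sf_cstM !sf_cst; case: ifP => //; by rewrite mulr0. Qed.
Lemma cst1 (K : comNzRingType) : cst (1 : K) = 1.
Proof. by []. Qed.
Lemma cst0 (K : comNzRingType) : cst (0 : K) = 0.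
Proof. apply: ser_ext => k; rewrite sf_cst; by case: ifP. Qed.
Lemma zSM (K : comNzRingType) a b : zS K a * zS K b = zS K (a + b).
Proof.
apply: ser_ext => k; rewrite sf_zSM /= /zS /=.
case: ifP => /eqP h; case: ifP => /eqP h' //; exfalso; lia.
Qed.

Definition isDer (K : comNzRingType) (D : K -> K) :=
  (forall x y, D (x + y) = D x + D y) /\ (forall x y, D (x * y) = D x * y + x * D y).

Lemma Der0 (K : comNzRingType) (D : K -> K) : isDer D -> D 0 = 0.
Proof. move=> [Da _]; have h := Da 0 0; rewrite addr0 in h.
by apply: (addrI (D 0)); rewrite addr0 -h. Qed.
Lemma Der1 (K : comNzRingType) (D : K -> K) : isDer D -> D 1 = 0.
Proof. move=> [_ Dm]; have h := Dm 1 1; rewrite !mulr1 mul1r in h.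
by apply: (addrI (D 1)); rewrite addr0 -h. Qed.
Lemma DerN (K : comNzRingType) (D : K -> K) x : isDer D -> D (- x) = - D x.
Proof. move=> hD; have h := (proj1 hD) x (- x); rewrite subrr (Der0 hD) in h.
by apply/eqP; rewrite -addr_eq0 addrC -h. Qed.
Lemma Der_nat (K : comNzRingType) (D : K -> K) (b : bool) : isDer D -> D (b%:R) = 0.
Proof. by move=> hD; case: b; rewrite ?Der0 ?Der1. Qed.
Lemma Der_sum (K : comNzRingType) (D : K -> K) N (F : 'I_N -> K) :
  isDer D -> D (\sum_(i < N) F i) = \sum_(i < N) D (F i).
Proof. move=> hD; exact: (big_morph D (proj1 hD) (Der0 hD)). Qed.

Lemma bnd_der (K : comNzRingType) (D : K -> K) (f : ser K) :
  bnd (fun k => if k <= stop f then D (sf f k) else 0).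
Proof. exists (stop f) => k lk; case: ifP => //; lia. Qed.
Definition sder (K : comNzRingType) (D : K -> K) (f : ser K) : ser K := Ser (bnd_der D f).

Lemma sderE (K : comNzRingType) (D : K -> K) (f : ser K) k :
  isDer D -> sf (sder D f) k = D (sf f k).
Proof. move=> hD /=; case: ifP => // h; rewrite (stopP f) ?Der0 //; lia. Qed.

Lemma vanish_der (K : comNzRingType) (D : K -> K) (f : ser K) T :
  isDer D -> vanish (sf f) T -> vanish (sf (sder D f)) T.
Proof. by move=> hD vf k lk; rewrite sderE // vf // Der0. Qed.

Lemma sderD (K : comNzRingType) (D : K -> K) (f g : ser K) :
  isDer D -> sder D (f + g) = sder D f + sder D g.
Proof. move=> hD; apply: ser_ext => k; by rewrite sfD !sderE // sfD (proj1 hD). Qed.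
Lemma sderN (K : comNzRingType) (D : K -> K) (f : ser K) :
  isDer D -> sder D (- f) = - sder D f.
Proof. move=> hD; apply: ser_ext => k; by rewrite sfN !sderE // sfN DerN. Qed.
Lemma sderB (K : comNzRingType) (D : K -> K) (f g : ser K) :
  isDer D -> sder D (f - g) = sder D f - sder D g.
Proof. by move=> hD; rewrite sderD // sderN. Qed.
Lemma sder_cst (K : comNzRingType) (D : K -> K) (c : K) :
  isDer D -> sder D (cst c) = cst (D c).
Proof. move=> hD; apply: ser_ext => k; rewrite sderE // !sf_cst; case: ifP => //; by rewrite Der0. Qed.
Lemma sder_zS (K : comNzRingType) (D : K -> K) m :
  isDer D -> sder D (zS K m) = 0.
Proof. move=> hD; apply: ser_ext => k; rewrite sderE //= ; case: ifP; by rewrite ?Der0 ?Der1. Qed.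

Lemma conv_der (K : comNzRingType) (D : K -> K) (f g : int -> K) T S k :
  isDer D -> D (conv f g T S k) = conv (fun x => D (f x)) g T S k + conv f (fun x => D (g x)) T S k.
Proof.
move=> hD; rewrite /conv; case: ifP => _; last by rewrite Der0 // addr0.
by rewrite Der_sum // -big_split; apply: eq_bigr => i _; rewrite (proj2 hD).
Qed.

Lemma sderM (K : comNzRingType) (D : K -> K) (f g : ser K) :
  isDer D -> sder D (f * g) = sder D f * g + f * sder D g.
Proof.
move=> hD; apply: ser_ext => k.
have vf := stopP f; have vg := stopP g.
rewrite sderE // sfD (sfM _ vf vg) (sfM _ (vanish_der hD vf) vg) (sfM _ vf (vanish_der hD vg)).
have ef : sf (sder D f) = fun x => D (sf f x).
  by apply: functional_extensionality_dep => x; rewrite sderE.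
have eg : sf (sder D g) = fun x => D (sf g x).
  by apply: functional_extensionality_dep => x; rewrite sderE.
by rewrite ef eg conv_der.
Qed.

Lemma sumrS (V : nmodType) N (F : nat -> V) : \sum_(m < N.+1) F m = \sum_(m < N) F m + F N.
Proof. by rewrite big_ord_recr. Qed.

Lemma coef_out (K : comNzRingType) (F : LS K) k : ls_top F < k -> coef F k = 0.
Proof. by rewrite /coef; case: ifP => //; lia. Qed.

Lemma bnd_LS (K : comNzRingType) (F : LS K) : bnd (coef F).
Proof. by exists (ls_top F) => k; apply: coef_out. Qed.
Definition ofLS (K : comNzRingType) (F : LS K) : ser K := Ser (bnd_LS F).
Lemma sf_ofLS (K : comNzRingType) (F : LS K) k : sf (ofLS F) k = coef F k.
Proof. by []. Qed.
Lemma vanish_LS (K : comNzRingType) (F : LS K) : vanish (sf (ofLS F)) (ls_top F).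
Proof. by move=> k; apply: coef_out. Qed.
Arguments vanish_LS {K} F.

Lemma ofLS_add (K : comNzRingType) (F G : LS K) : ofLS (ls_add F G) = ofLS F + ofLS G.
Proof.
apply: ser_ext => k; rewrite sfD !sf_ofLS {1}/coef /=; case: ifP => // h.
by rewrite !coef_out ?addr0 //; move: h => /negbT; rewrite -ltNge gt_max => /andP[].
Qed.
Lemma ofLS_scale (K : comNzRingType) c (F : LS K) : ofLS (ls_scale c F) = cst c * ofLS F.
Proof.
apply: ser_ext => k; rewrite sf_cstM !sf_ofLS {1}/coef /=; case: ifP => // h.
by rewrite coef_out ?mulr0 //; lia.
Qed.
Lemma ofLS_sub (K : comNzRingType) (F G : LS K) : ofLS (ls_sub F G) = ofLS F - ofLS G.
Proof. by rewrite /ls_sub ofLS_add ofLS_scale cstN cst1 mulN1r. Qed.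
Lemma ofLS_mul (K : comNzRingType) (F G : LS K) : ofLS (ls_mul F G) = ofLS F * ofLS G.
Proof.
apply: ser_ext => k; rewrite (sfM _ (vanish_LS F) (vanish_LS G)) sf_ofLS.
by [].
Qed.
Lemma ofLS_der (K : comNzRingType) (D : K -> K) (F : LS K) :
  isDer D -> ofLS (ls_der D F) = sder D (ofLS F).
Proof.
move=> hD; apply: ser_ext => k; rewrite sderE // !sf_ofLS {1}/coef /=; case: ifP => // h.
by rewrite coef_out ?Der0 //; lia.
Qed.
Lemma ofLS_Z (K : comNzRingType) m : ofLS (lsZ K m) = zS K m.
Proof.
apply: ser_ext => k; rewrite sf_ofLS /coef /=; case: ifP => h; case: ifP => // /eqP; lia.
Qed.
Lemma ofLS_zero (K : comNzRingType) : ofLS (ls_zero K) = 0.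
Proof. by apply: ser_ext => k; rewrite sf_ofLS /coef /=; case: ifP. Qed.
Lemma ofLS_big (K : comNzRingType) N (F : 'I_N -> LS K) :
  ofLS (\big[@ls_add K/ls_zero K]_(m < N) F m) = \sum_(m < N) ofLS (F m).
Proof. exact: (big_morph (@ofLS K) (@ofLS_add K) (@ofLS_zero K)). Qed.

Definition nab (K : comNzRingType) (D : K -> K) (u : nat -> K) (f : ser K) : ser K :=
  sder D f + ofLS (hser u) * f.

Lemma fdbE (K : comNzRingType) (D : K -> K) u k :
  isDer D -> ofLS (fdb D u k) = iter k (nab D u) 1.
Proof.
move=> hD; elim: k => [|k IH] /=; first by rewrite ofLS_Z.
by rewrite ofLS_add ofLS_der // ofLS_mul IH.
Qed.

Lemma vanish_h (K : comNzRingType) (u : nat -> K) : vanish (sf (ofLS (hser u))) 1.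
Proof. exact: vanish_LS. Qed.
Lemma sf_h1 (K : comNzRingType) (u : nat -> K) : sf (ofLS (hser u)) 1 = 1.
Proof. by []. Qed.

Lemma iter_nab_top (K : comNzRingType) (D : K -> K) u (f : ser K) T m :
  isDer D -> vanish (sf f) T -> sf f T = 1 ->
  vanish (sf (iter m (nab D u) f)) (T + m%:Z) /\ sf (iter m (nab D u) f) (T + m%:Z) = 1.
Proof.
move=> hD vf f1; elim: m => [|m [v1 e1]]; first by rewrite addr0.
rewrite iterS.
have e : T + m.+1%:Z = 1 + (T + m%:Z) by lia.
have vs := vanish_der hD v1.
have vm := vanishM (vanish_h u) v1.
split.
  move=> k lk; rewrite /nab sfD vm ?vs ?addr0 //; lia.
rewrite /nab e sfD (sf_topM (vanish_h u) v1) sf_h1 e1 mulr1 vs ?add0r //; lia.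
Qed.

Lemma basis_top (K : comNzRingType) (D : K -> K) u m :
  isDer D -> vanish (sf (iter m (nab D u) 1)) m%:Z /\ sf (iter m (nab D u) 1) m%:Z = 1.
Proof.
move=> hD; have := @iter_nab_top K D u 1 0 m hD.
rewrite add0r; apply => //.
by move=> k lk; rewrite sf_one; case: ifP => // /eqP; lia.
Qed.

Definition inV (K : comNzRingType) (D : K -> K) u (f : ser K) :=
  exists N (c : nat -> K), f = \sum_(m < N) cst (c m) * iter m (nab D u) 1.

Lemma pad_sum (K : comNzRingType) (F : nat -> ser K) (c : nat -> K) N N' :
  (N <= N')%N -> \sum_(m < N) cst (c m) * F m =
     \sum_(m < N') cst (if (m < N)%N then c m else 0) * F m.
Proof.
move=> le; rewrite (big_ord_widen _ (fun m => cst (c m) * F m) le) big_mkcond.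
by apply: eq_bigr => i _; case: ifP => //; rewrite cst0 mul0r.
Qed.

Lemma inV0 (K : comNzRingType) (D : K -> K) u : inV D u 0.
Proof. by exists 0%N, (fun _ => 0); rewrite big_ord0. Qed.

Lemma inVD (K : comNzRingType) (D : K -> K) u f g : inV D u f -> inV D u g -> inV D u (f + g).
Proof.
move=> [N [c ->]] [N' [c' ->]].
exists (maxn N N'), (fun m => (if (m < N)%N then c m else 0) + (if (m < N')%N then c' m else 0)).
rewrite (pad_sum _ _ (leq_maxl N N')) (pad_sum _ _ (leq_maxr N N')) -big_split.
by apply: eq_bigr => i _; rewrite cstD mulrDl.
Qed.

Lemma inVZ (K : comNzRingType) (D : K -> K) u c f : inV D u f -> inV D u (cst c * f).
Proof.
move=> [N [c' ->]]; exists N, (fun m => c * c' m); rewrite mulr_sumr.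
by apply: eq_bigr => i _; rewrite cstM mulrA.
Qed.

Lemma inV_sum (K : comNzRingType) (D : K -> K) u N (F : nat -> ser K) :
  (forall m, inV D u (F m)) -> inV D u (\sum_(m < N) F m).
Proof.
move=> H; elim: N => [|N IH]; first by rewrite big_ord0; apply: inV0.
by rewrite big_ord_recr /=; apply: inVD.
Qed.

Lemma inV_e (K : comNzRingType) (D : K -> K) u m : inV D u (iter m (nab D u) 1).
Proof.
exists m.+1, (fun i => (i == m)%:R); rewrite big_ord_recr /= eqxx cst1 mul1r big1 ?add0r //.
move=> i _; have := ltn_ord i; rewrite ltn_neqAle => /andP[ne _].
by rewrite (negbTE ne) cst0 mul0r.
Qed.

Lemma nabD (K : comNzRingType) (D : K -> K) u f g :
  isDer D -> nab D u (f + g) = nab D u f + nab D u g.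
Proof. by move=> hD; rewrite /nab sderD // mulrDr; ring. Qed.
Lemma nab0 (K : comNzRingType) (D : K -> K) u : isDer D -> nab D u 0 = 0.
Proof.
move=> hD; have := nabD u 0 0 hD; rewrite addr0 => h.
by apply: (addrI (nab D u 0)); rewrite addr0 -h.
Qed.
Lemma nab_cstM (K : comNzRingType) (D : K -> K) u c f :
  isDer D -> nab D u (cst c * f) = cst (D c) * f + cst c * nab D u f.
Proof. by move=> hD; rewrite /nab sderM // sder_cst //; ring. Qed.
Lemma nab_sum (K : comNzRingType) (D : K -> K) u N (F : 'I_N -> ser K) :
  isDer D -> nab D u (\sum_(m < N) F m) = \sum_(m < N) nab D u (F m).
Proof. move=> hD; exact: (big_morph (nab D u) (fun x y => nabD u x y hD) (nab0 u hD)). Qed.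
Lemma nab_zS (K : comNzRingType) (D : K -> K) u m f :
  isDer D -> nab D u (zS K m * f) = zS K m * nab D u f.
Proof. by move=> hD; rewrite /nab sderM // sder_zS //; ring. Qed.
Lemma iter_nab_zS (K : comNzRingType) (D : K -> K) u m f k :
  isDer D -> iter k (nab D u) (zS K m * f) = zS K m * iter k (nab D u) f.
Proof. by move=> hD; elim: k => [|k IH] //=; rewrite IH nab_zS. Qed.

Lemma inV_nab (K : comNzRingType) (D : K -> K) u f :
  isDer D -> inV D u f -> inV D u (nab D u f).
Proof.
move=> hD [N [c ->]]; rewrite nab_sum //.
apply: (@inV_sum _ _ _ _ (fun m => nab D u (cst (c m) * iter m (nab D u) 1))) => m.
rewrite nab_cstM //; apply: inVD; apply: inVZ; first exact: inV_e.
by rewrite -iterS; apply: inV_e.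
Qed.

Lemma inV_iter (K : comNzRingType) (D : K -> K) u f k :
  isDer D -> inV D u f -> inV D u (iter k (nab D u) f).
Proof. by move=> hD vf; elim: k => [|k IH] //; rewrite iterS; apply: inV_nab. Qed.

Lemma inV_op (K : comNzRingType) (D : K -> K) u f N (c : nat -> K) :
  isDer D -> inV D u f -> inV D u (\sum_(m < N) cst (c m) * iter m (nab D u) f).
Proof.
move=> hD vf; apply: (@inV_sum _ _ _ _ (fun m => cst (c m) * iter m (nab D u) f)) => m.
by apply: inVZ; apply: inV_iter.
Qed.

Lemma coef_fdb (K : comNzRingType) (D : K -> K) u k x :
  isDer D -> coef (fdb D u k) x = sf (iter k (nab D u) 1) x.
Proof. by move=> hD; rewrite -sf_ofLS fdbE. Qed.

Lemma kpred_coef (K : comNzRingType) (D : K -> K) u l (F : LS K) x :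
  isDer D -> 0 <= x -> coef (kpred D u F l) x = if x < l%:Z then 0 else coef F x.
Proof.
move=> hD x0; elim: l F => [|l IH] F /=.
  by case: ifP => //; lia.
rewrite IH -!sf_ofLS ofLS_sub ofLS_scale sfB sf_cstM fdbE // !sf_ofLS.
have [v1 e1] := basis_top u l hD.
case: (ltgtP x l%:Z) => h.
- by case: ifP => //; lia.
- have -> : (x < l.+1%:Z) = false by lia.
  by rewrite v1 // mulr0 subr0.
- rewrite h; have -> : l%:Z < l.+1%:Z by lia.
  by rewrite e1 mulr1 subrr.
Qed.

Lemma sum_delta (K : comNzRingType) (F : nat -> ser K) (d : K) N l :
  (l < N)%N -> \sum_(m < N) cst (if (m == l :> nat) then d else 0) * F m = cst d * F l.
Proof.
move=> lN; rewrite (bigD1 (Ordinal lN)) //= eqxx big1 ?addr0 //.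
move=> i /eqP ne; case: ifP; last by rewrite cst0 mul0r.
by move=> /eqP e; exfalso; apply: ne; apply: val_inj.
Qed.

Lemma kpred_comb (K : comNzRingType) (D : K -> K) u l (F : LS K) N (c : nat -> K) :
  isDer D -> (l <= N)%N ->
  ofLS F = \sum_(m < N) cst (c m) * iter m (nab D u) 1 ->
  exists c' : nat -> K, ofLS (kpred D u F l) = \sum_(m < N) cst (c' m) * iter m (nab D u) 1.
Proof.
move=> hD; elim: l F c => [|l IH] F c lN eF /=; first by exists c.
apply: (IH _ (fun m => c m - (if m == l then coef F l%:Z else 0))); first by lia.
rewrite ofLS_sub ofLS_scale fdbE // eF -(sum_delta _ _ lN) -sumrB.
by apply: eq_bigr => i _; rewrite cstB mulrBl.
Qed.

Lemma KPcur_inV (K : comNzRingType) (D : K -> K) u j :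
  isDer D -> inV D u (ofLS (KPcur D u j)).
Proof.
move=> hD.
have e : ofLS (fdb D u j) = \sum_(m < j.+1) cst (if (m == j :> nat) then 1 else 0) * iter m (nab D u) 1.
  by rewrite sum_delta // cst1 mul1r fdbE.
have [c ->] := @kpred_comb K D u j (fdb D u j) j.+1 (fun m : nat => if m == j then 1 else 0) hD (leqnSn j) e.
by exists j.+1, c.
Qed.

Lemma KPcur_coef (K : comNzRingType) (D : K -> K) u j x :
  isDer D -> 0 <= x -> coef (KPcur D u j) x = (x == j%:Z)%:R.
Proof.
move=> hD x0; rewrite /KPcur kpred_coef //.
case: ifP => h; first by case: eqP => //; lia.
rewrite coef_fdb //; have [v1 e1] := basis_top u j hD.
case: eqP => [->|ne]; first by rewrite e1.
by rewrite v1 //; lia.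
Qed.

Lemma KPcur_vanish (K : comNzRingType) (D : K -> K) u j :
  isDer D -> vanish (sf (ofLS (KPcur D u j))) j%:Z.
Proof. move=> hD x lx; rewrite sf_ofLS KPcur_coef //; last lia. by case: eqP => //; lia. Qed.

Lemma S_coef (K : comNzRingType) (D : K -> K) u a l x :
  isDer D -> -1 <= l -> 0 <= x -> coef (S_rhs D l u a) x = coef (S_lhs l a) x.
Proof.
move=> hD l1 x0.
rewrite -!sf_ofLS /S_rhs /S_lhs ofLS_add ofLS_big ofLS_mul ofLS_Z sfD sf_sum sf_zSM.
rewrite sf_ofLS KPcur_coef //.
under eq_bigr => i _ do rewrite ofLS_scale sf_cstM sf_ofLS KPcur_coef //.
set k := absz ((l + 1)%R).
have lk : l = k%:Z - 1 by rewrite /k; lia.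
have [xn ex] : exists xn : nat, x = xn%:Z by exists (absz x); lia.
rewrite ex sf_ofLS /coef /=.
have [xk|xk|xk] := ltngtP xn k.
- rewrite (_ : (xn%:Z == k%:Z) = false); last by apply/negbTE; apply/eqP; lia.
  have Hk : (k.-1 - xn < k)%N by lia.
  rewrite add0r (bigD1 (Ordinal Hk)) //=.
  rewrite big1 ?addr0; last first.
    move=> i /eqP ne; case: eqP; last by rewrite mulr0.
    move=> e; exfalso; apply: ne; apply: val_inj => /=; have := ltn_ord i; lia.
  rewrite (_ : (xn%:Z == (k.-1 - (k.-1 - xn))%N%:Z) = true); last by apply/eqP; lia.
  rewrite mulr1; case: ifP => h; last by exfalso; lia.
  case: ifP => h2; first by exfalso; move/eqP: h2; lia.
  case: ifP => h3; last by exfalso; lia.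
  congr a; lia.
- rewrite (_ : (xn%:Z == k%:Z) = false); last by apply/negbTE; apply/eqP; lia.
  rewrite add0r big1; last first.
    move=> i _; case: eqP; last by rewrite mulr0.
    move=> e; exfalso; have := ltn_ord i; lia.
  by case: ifP => // h; exfalso; lia.
- subst xn; rewrite eqxx big1; last first.
    move=> i _; case: eqP; last by rewrite mulr0.
    move=> e; exfalso; have := ltn_ord i; lia.
  rewrite addr0; case: ifP => h; last by exfalso; lia.
  by case: ifP => // /eqP; lia.
Qed.

Definition Nid (R : comNzRingType) (p : {poly R}) := p`_0 = 0 /\ p`_1 = 0.
Definition negl (R : comNzRingType) (f : ser {poly R}) := forall k, Nid (sf f k).

Lemma Nid0 (R : comNzRingType) : Nid (0 : {poly R}).
Proof. by split; rewrite coef0. Qed.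
Lemma NidD (R : comNzRingType) (p q : {poly R}) : Nid p -> Nid q -> Nid (p + q).
Proof. by move=> [p0 p1] [q0 q1]; split; rewrite coefD ?p0 ?q0 ?p1 ?q1 addr0. Qed.
Lemma NidN (R : comNzRingType) (p : {poly R}) : Nid p -> Nid (- p).
Proof. by move=> [p0 p1]; split; rewrite coefN ?p0 ?p1 oppr0. Qed.
Lemma NidB (R : comNzRingType) (p q : {poly R}) : Nid p -> Nid q -> Nid (p - q).
Proof. by move=> hp hq; apply: NidD => //; apply: NidN. Qed.
Lemma NidM (R : comNzRingType) (p q : {poly R}) : Nid q -> Nid (p * q).
Proof.
move=> [q0 q1]; split; rewrite coefM.
  by rewrite big_ord1 q0 mulr0.
by rewrite !big_ord_recr big_ord0 /= q0 q1 !mulr0 !addr0.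
Qed.
Lemma Nid_sum (R : comNzRingType) N (F : 'I_N -> {poly R}) :
  (forall i, Nid (F i)) -> Nid (\sum_(i < N) F i).
Proof.
move=> H; elim/big_rec: _ => [|i x _ hx]; first exact: Nid0.
exact: NidD.
Qed.
Lemma NidXX (R : comNzRingType) (p : {poly R}) : Nid ('X * ('X * p)).
Proof. by split; rewrite !coefXM. Qed.

Lemma neglD (R : comNzRingType) (f g : ser {poly R}) : negl f -> negl g -> negl (f + g).
Proof. by move=> hf hg k; rewrite sfD; apply: NidD. Qed.
Lemma neglN (R : comNzRingType) (f : ser {poly R}) : negl f -> negl (- f).
Proof. by move=> hf k; rewrite sfN; apply: NidN. Qed.
Lemma neglB (R : comNzRingType) (f g : ser {poly R}) : negl f -> negl g -> negl (f - g).
Proof. by move=> hf hg; apply: neglD => //; apply: neglN. Qed.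
Lemma negl0 (R : comNzRingType) : negl (0 : ser {poly R}).
Proof. move=> k; rewrite sf0; exact: Nid0. Qed.
Lemma neglM (R : comNzRingType) (f g : ser {poly R}) : negl g -> negl (f * g).
Proof.
move=> hg k; rewrite (sfM _ (stopP f) (stopP g)) /conv; case: ifP => _; last exact: Nid0.
by apply: Nid_sum => i; apply: NidM.
Qed.
Lemma negl_sum (R : comNzRingType) N (F : 'I_N -> ser {poly R}) :
  (forall i, negl (F i)) -> negl (\sum_(i < N) F i).
Proof. by move=> H k; rewrite sf_sum; apply: Nid_sum => i; apply: H. Qed.
Lemma neglXX (R : comNzRingType) (E : ser {poly R}) : negl (cst 'X * (cst 'X * E)).
Proof. by move=> k; rewrite !sf_cstM; apply: NidXX. Qed.
Lemma negl_cstM (R : comNzRingType) c (f : ser {poly R}) : Nid c -> negl (cst c * f).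
Proof. move=> hc k; rewrite sf_cstM mulrC; exact: NidM. Qed.

Lemma isDer_map (R : comNzRingType) (D : R -> R) :
  isDer D -> isDer (map_poly D).
Proof.
move=> hD; have D0 := Der0 hD; split.
  by move=> p q; apply/polyP => i; rewrite coefD !coef_map_id0 // coefD (proj1 hD).
move=> p q; apply/polyP => i; rewrite coefD !coef_map_id0 // !coefM Der_sum //.
rewrite -big_split; apply: eq_bigr => j _; rewrite !coef_map_id0 // (proj2 hD). by [].
Qed.
Lemma Nid_der (R : comNzRingType) (D : R -> R) (p : {poly R}) :
  isDer D -> Nid p -> Nid (map_poly D p).
Proof. by move=> hD [p0 p1]; split; rewrite coef_map_id0 ?Der0 // ?p0 ?p1 Der0. Qed.
Lemma negl_der (R : comNzRingType) (D : R -> R) (f : ser {poly R}) :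
  isDer D -> negl f -> negl (sder (map_poly D) f).
Proof. move=> hD hf k; rewrite sderE; [exact: Nid_der | exact: isDer_map]. Qed.
Lemma mapC (R : comNzRingType) (D : R -> R) (c : R) :
  isDer D -> map_poly D c%:P = (D c)%:P.
Proof. by move=> hD; apply/polyP => i; rewrite coef_map_id0 ?Der0 // !coefC; case: ifP; rewrite ?Der0. Qed.
Lemma mapX (R : comNzRingType) (D : R -> R) :
  isDer D -> map_poly D 'X = 0.
Proof. by move=> hD; apply/polyP => i; rewrite coef_map_id0 ?Der0 // coefX coef0 Der_nat. Qed.

Lemma unique_negl (R : comNzRingType) (D : R -> R) (u : nat -> {poly R}) (f : ser {poly R}) N (c : nat -> {poly R}) :
  isDer D ->
  negl (f - \sum_(m < N) cst (c m) * iter m (nab (map_poly D) u) 1) ->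
  (forall x, 0 <= x -> Nid (sf f x)) -> negl f.
Proof.
move=> hD; have hD' := isDer_map hD.
elim: N => [|N IH] h0 hpos.
  by move: h0; rewrite big_ord0 subr0.
apply: IH => //.
have [v1 e1] := basis_top u N hD'.
have cN : Nid (c N).
  have := h0 N%:Z; rewrite sfB sf_sum big_ord_recr sf_cstM e1 mulr1 big1.
    have x0 : (0 : int) <= N%:Z by lia.
    rewrite /= add0r => hN; have := NidB (hpos _ x0) hN.
    by rewrite opprB addrC subrK.
  move=> i _; rewrite sf_cstM; have [v2 _] := basis_top u i hD'.
  by rewrite v2 ?mulr0 //; have := ltn_ord i; lia.
have := neglD h0 (negl_cstM (iter N (nab (map_poly D) u) 1) cN).
by rewrite big_ord_recr opprD addrA subrK.
Qed.

Definition rel (R : comNzRingType) (F' : LS {poly R}) (F : LS R) :=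
  ls_top F' = ls_top F /\ forall k, ls_co F' k = (ls_co F k)%:P.

Lemma rel_coef (R : comNzRingType) (F' : LS {poly R}) (F : LS R) k :
  rel F' F -> coef F' k = (coef F k)%:P.
Proof. by move=> [e1 e2]; rewrite /coef e1 e2; case: ifP. Qed.

Lemma polyC_bool (R : comNzRingType) (b : bool) : ((b%:R : R)%:P) = b%:R.
Proof. by case: b; rewrite ?polyC1 ?polyC0. Qed.
Lemma polyC_sum (R : comNzRingType) N (F : 'I_N -> R) : (\sum_(i < N) F i)%:P = \sum_(i < N) (F i)%:P.
Proof. exact: (big_morph (@polyC R) (@polyCD R) (@polyC0 R)). Qed.

Lemma relZ (R : comNzRingType) m : rel (lsZ {poly R} m) (lsZ R m).
Proof. by split => // k /=; rewrite polyC_bool. Qed.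
Lemma rel_zero (R : comNzRingType) : rel (ls_zero {poly R}) (ls_zero R).
Proof. by split => // k /=; rewrite polyC0. Qed.
Lemma rel_hser (R : comNzRingType) (u : nat -> R) : rel (hser (fun i => (u i)%:P)) (hser u).
Proof.
split => // k /=; case: ifP => _; first by rewrite polyC1.
by case: ifP => _ //; rewrite polyC0.
Qed.
Lemma rel_aser (R : comNzRingType) (u : nat -> R) : rel (aser (fun i => (u i)%:P)) (aser u).
Proof.
split => // k /=; case: ifP => _; first by rewrite polyC1.
by case: ifP => _ //; rewrite polyC0.
Qed.
Lemma rel_add (R : comNzRingType) F' F G' (G : LS R) :
  rel F' F -> rel G' G -> rel (ls_add F' G') (ls_add F G).
Proof.
move=> hF hG; split; first by rewrite /= (proj1 hF) (proj1 hG).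
by move=> k /=; rewrite (rel_coef _ hF) (rel_coef _ hG) polyCD.
Qed.
Lemma rel_scale (R : comNzRingType) F' (F : LS R) c :
  rel F' F -> rel (ls_scale c%:P F') (ls_scale c F).
Proof.
move=> hF; split; first by rewrite /= (proj1 hF).
by move=> k /=; rewrite (rel_coef _ hF) polyCM.
Qed.
Lemma rel_sub (R : comNzRingType) F' F G' (G : LS R) :
  rel F' F -> rel G' G -> rel (ls_sub F' G') (ls_sub F G).
Proof.
move=> hF hG; rewrite /ls_sub; apply: rel_add => //.
by rewrite -polyC1 -polyCN; apply: rel_scale.
Qed.
Lemma rel_mul (R : comNzRingType) F' F G' (G : LS R) :
  rel F' F -> rel G' G -> rel (ls_mul F' G') (ls_mul F G).
Proof.
move=> hF hG; split; first by rewrite /= (proj1 hF) (proj1 hG).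
move=> k /=; rewrite (proj1 hF) (proj1 hG) polyC_sum; apply: eq_bigr => i _.
by rewrite (rel_coef _ hF) (rel_coef _ hG) polyCM.
Qed.
Lemma rel_der (R : comNzRingType) (D : R -> R) F' (F : LS R) :
  isDer D -> rel F' F -> rel (ls_der (map_poly D) F') (ls_der D F).
Proof.
move=> hD hF; split; first by rewrite /= (proj1 hF).
by move=> k /=; rewrite (rel_coef _ hF) mapC.
Qed.
Lemma rel_fdb (R : comNzRingType) (D : R -> R) (u : nat -> R) k :
  isDer D -> rel (fdb (map_poly D) (fun i => (u i)%:P) k) (fdb D u k).
Proof.
move=> hD; elim: k => [|k IH] /=; first exact: relZ.
by apply: rel_add; [apply: rel_der | apply: rel_mul => //; apply: rel_hser].
Qed.
Lemma rel_kpred (R : comNzRingType) (D : R -> R) (u : nat -> R) l F' F :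
  isDer D -> rel F' F -> rel (kpred (map_poly D) (fun i => (u i)%:P) F' l) (kpred D u F l).
Proof.
move=> hD; elim: l F' F => [|l IH] F' F hF //=.
apply: IH; apply: rel_sub => //; rewrite (rel_coef _ hF).
by apply: rel_scale; apply: rel_fdb.
Qed.
Lemma rel_KPcur (R : comNzRingType) (D : R -> R) (u : nat -> R) j :
  isDer D -> rel (KPcur (map_poly D) (fun i => (u i)%:P) j) (KPcur D u j).
Proof. by move=> hD; apply: rel_kpred => //; apply: rel_fdb. Qed.
Lemma rel_big (R : comNzRingType) N (F' : nat -> LS {poly R}) (F : nat -> LS R) :
  (forall m, rel (F' m) (F m)) ->
  rel (\big[@ls_add _/ls_zero _]_(m < N) F' m) (\big[@ls_add _/ls_zero _]_(m < N) F m).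
Proof.
elim: N F' F => [|N IH] F' F H; first by rewrite !big_ord0; apply: rel_zero.
rewrite !big_ord_recl; apply: rel_add => //.
exact: (IH (fun m => F' m.+1) (fun m => F m.+1)).
Qed.
Lemma rel_Srhs (R : comNzRingType) (D : R -> R) (u a : nat -> R) l :
  isDer D -> rel (S_rhs (map_poly D) l (fun i => (u i)%:P) (fun i => (a i)%:P)) (S_rhs D l u a).
Proof.
move=> hD; rewrite /S_rhs; apply: rel_add; first exact: rel_KPcur.
apply: (@rel_big _ _ (fun m => ls_scale (a m)%:P (KPcur (map_poly D) (fun i => (u i)%:P) (_ - m)))
          (fun m => ls_scale (a m) (KPcur D u (_ - m)))) => m.
by apply: rel_scale; apply: rel_KPcur.
Qed.
Lemma rel_Slhs (R : comNzRingType) (a : nat -> R) l :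
  rel (S_lhs l (fun i => (a i)%:P)) (S_lhs l a).
Proof. by apply: rel_mul; [apply: relZ | apply: rel_aser]. Qed.

Lemma in_S_lift (R : comNzRingType) (D : R -> R) (u a : nat -> R) l :
  isDer D -> in_S D l u a -> in_S (map_poly D) l (fun i => (u i)%:P) (fun i => (a i)%:P).
Proof.
move=> hD h k; rewrite (rel_coef _ (rel_Slhs a l)) (rel_coef _ (rel_Srhs u a l hD)).
by rewrite h.
Qed.

Lemma tri (K : comNzRingType) (D : K -> K) u (A : ser K) :
  isDer D -> vanish (sf A) 1 -> sf A 1 = 1 ->
  forall (J : nat) (G : ser K), vanish (sf G) J%:Z ->
  exists c : nat -> K, vanish (sf (G - \sum_(m < J) cst (c m) * iter m (nab D u) A)) 0.
Proof.
move=> hD vA A1; elim => [|J IH] G vG.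
  by exists (fun _ => 0); rewrite big_ord0 subr0.
have [v1 e1] := iter_nab_top u J hD vA A1.
set G' := G - cst (sf G J.+1%:Z) * iter J (nab D u) A.
have vG' : vanish (sf G') J%:Z.
  move=> k lk; rewrite /G' sfB sf_cstM.
  have [->|ne] := eqVneq k J.+1%:Z.
    by rewrite (_ : J.+1%:Z = 1 + J%:Z) ?e1 ?mulr1 ?subrr //; lia.
  by rewrite vG ?v1 ?mulr0 ?subr0 //; lia.
have [c hc] := IH G' vG'.
exists (fun m => if m == J then sf G J.+1%:Z else c m).
rewrite (sumrS _ (fun m => cst (if m == J then sf G J.+1%:Z else c m) * iter m (nab D u) A)) eqxx.
rewrite (eq_bigr (fun m : 'I_J => cst (c m) * iter m (nab D u) A)); last first.
  by move=> i _; rewrite (_ : (i == J :> nat) = false) //; apply/negbTE; rewrite neq_ltn ltn_ord.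
by rewrite opprD addrA addrAC.
Qed.

Lemma aser_T (R : comNzRingType) (a : nat -> R) (B : ser {poly R}) :
  vanish (sf B) 0 ->
  ofLS (aser (fun i => (a i)%:P + sf B (- i%:Z) * 'X)) =
  ofLS (aser (fun i => (a i)%:P)) + cst 'X * B.
Proof.
move=> vB; apply: ser_ext => k; rewrite sfD sf_cstM !sf_ofLS /coef /=.
case: ifP => h1.
  case: ifP => h2; first by rewrite vB ?mulr0 ?addr0 //; move/eqP: h2; lia.
  case: ifP => h3; last by rewrite vB ?mulr0 ?addr0 //; lia.
  by rewrite mulrC; congr (_ + _ * _); congr (sf B); lia.
by rewrite vB ?mulr0 ?addr0 //; lia.
Qed.

Lemma KPvecE (R : comNzRingType) (D : R -> R) u j i :
  isDer D ->
  (KPvec D u j i)%:P = map_poly D (coef (KPcur (map_poly D) (fun i => (u i)%:P) j) (- (i.+1)%:Z)).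
Proof.
move=> hD; rewrite /KPvec -(rel_coef _ (rel_der hD (rel_KPcur u j hD))).
have hD' := isDer_map hD; by rewrite -[coef (ls_der _ _) _]sf_ofLS ofLS_der // sderE.
Qed.

Lemma hser_T (R : comNzRingType) (D : R -> R) u j :
  isDer D ->
  ofLS (hser (fun i => (u i)%:P + (KPvec D u j i)%:P * 'X)) =
  ofLS (hser (fun i => (u i)%:P)) + cst 'X * sder (map_poly D) (ofLS (KPcur (map_poly D) (fun i => (u i)%:P) j)).
Proof.
move=> hD; have hD' := isDer_map hD.
apply: ser_ext => k; rewrite sfD sf_cstM sderE // !sf_ofLS.
have Hpos : forall x, 0 <= x -> map_poly D (coef (KPcur (map_poly D) (fun i => (u i)%:P) j) x) = 0.
  by move=> x x0; rewrite KPcur_coef // Der_nat.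
rewrite {1 2}/coef /=.
case: ifP => h1; last by rewrite Hpos ?mulr0 ?addr0 //; lia.
case: ifP => h2.
  by move/eqP: h2 => ->; rewrite Hpos // mulr0 addr0.
case: ifP => h3; last by rewrite Hpos ?mulr0 ?addr0 //; lia.
rewrite KPvecE // mulrC; congr (_ + _ * map_poly D (coef _ _)); lia.
Qed.

Lemma claimT (R : comNzRingType) (D : R -> R) (uL hT : nat -> {poly R}) (H : ser {poly R}) :
  isDer D ->
  ofLS (hser hT) = ofLS (hser uL) + cst 'X * sder (map_poly D) H ->
  forall m, negl (iter m (nab (map_poly D) hT) 1 -
     (iter m (nab (map_poly D) uL) 1 + cst 'X * (iter m (nab (map_poly D) uL) H - H * iter m (nab (map_poly D) uL) 1))).
Proof.
move=> hD hT_eq; have hD' := isDer_map hD.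
have sX : sder (map_poly D) (cst 'X) = 0 by rewrite sder_cst // mapX // cst0.
elim=> [|m IH].
  rewrite /= (_ : _ - _ = 0); first exact: negl0.
  by ring.
rewrite !iterS.
set e := iter m (nab (map_poly D) uL) 1.
set N := iter m (nab (map_poly D) uL) H.
set eT := iter m (nab (map_poly D) hT) 1.
set G := e + cst 'X * (N - H * e).
set E := eT - G.
have -> : eT = G + E by rewrite /E; ring.
rewrite nabD //.
have key : nab (map_poly D) hT G - (nab (map_poly D) uL e + cst 'X * (nab (map_poly D) uL N - H * nab (map_poly D) uL e))
   = cst 'X * (cst 'X * (sder (map_poly D) H * (N - H * e))).
  rewrite /nab hT_eq /G !sderD // !sderM // sX !sderB // !sderM //.
  ring.
have -> : nab (map_poly D) hT G + nab (map_poly D) hT E -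
   (nab (map_poly D) uL e + cst 'X * (nab (map_poly D) uL N - H * nab (map_poly D) uL e)) =
   cst 'X * (cst 'X * (sder (map_poly D) H * (N - H * e))) + nab (map_poly D) hT E.
  by rewrite -key; ring.
apply: neglD; first exact: neglXX.
by rewrite /nab; apply: neglD; [apply: negl_der | apply: neglM].
Qed.

Lemma inVB (K : comNzRingType) (D : K -> K) u f g : inV D u f -> inV D u g -> inV D u (f - g).
Proof.
move=> hf hg; apply: inVD => //.
by rewrite -mulN1r -cst1 -cstN; apply: inVZ.
Qed.

Lemma sum_split4 (K : comNzRingType) N (a b d f : nat -> ser K) (X H : ser K) :
  \sum_(m < N) (a m + (X * b m + (X * d m + (X * (X * f m) - X * (H * a m))))) =
  \sum_(m < N) a m + (X * \sum_(m < N) b m + (X * \sum_(m < N) d m +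
     (X * (X * \sum_(m < N) f m) - X * (H * \sum_(m < N) a m)))).
Proof.
by rewrite !big_split /= sumrN !mulr_sumr.
Qed.

Lemma member (R : comNzRingType) (D : R -> R) (uL hT : nat -> {poly R}) (H A B : ser {poly R})
   (L : int) Nc (c : nat -> {poly R}) :
  isDer D ->
  ofLS (hser hT) = ofLS (hser uL) + cst 'X * sder (map_poly D) H ->
  inV (map_poly D) uL H ->
  inV (map_poly D) uL (zS _ L * A) ->
  B = \sum_(m < Nc) cst (c m) * iter m (nab (map_poly D) uL) A - H * A ->
  exists N' (cT : nat -> {poly R}),
    negl (zS _ L * (A + cst 'X * B) - \sum_(m < N') cst (cT m) * iter m (nab (map_poly D) hT) 1).
Proof.
move=> hD hT_eq HV [N [s eA]] eB.
have hD' := isDer_map hD.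
set Dp := map_poly D.
set W := \sum_(m < Nc) cst (c m) * iter m (nab Dp uL) (zS _ L * A) -
         \sum_(m < N) cst (s m) * iter m (nab Dp uL) H.
have WV : inV Dp uL W.
  apply: inVB; first by apply: inV_op => //; exists N, s.
  by apply: inV_op.
have [N2 [c' eW]] := WV.
set Ns := maxn N N2.
set ss := fun m => if (m < N)%N then s m else 0.
set cs := fun m => if (m < N2)%N then c' m else 0.
exists Ns, (fun m => ss m + 'X * cs m).
set e := fun m => iter m (nab Dp uL) 1.
set NN := fun m => iter m (nab Dp uL) H.
set eT := fun m => iter m (nab Dp hT) 1.
set G := fun m => e m + cst 'X * (NN m - H * e m).
have eA' : zS _ L * A = \sum_(m < Ns) cst (ss m) * e m by rewrite eA (pad_sum _ _ (leq_maxl N N2)).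
have eW' : W = \sum_(m < Ns) cst (cs m) * e m by rewrite eW (pad_sum _ _ (leq_maxr N N2)).
have eN' : \sum_(m < N) cst (s m) * iter m (nab Dp uL) H = \sum_(m < Ns) cst (ss m) * NN m.
  by rewrite (pad_sum _ _ (leq_maxl N N2)).
have split : \sum_(m < Ns) cst (ss m + 'X * cs m) * eT m =
   \sum_(m < Ns) cst (ss m + 'X * cs m) * G m + \sum_(m < Ns) cst (ss m + 'X * cs m) * (eT m - G m).
  by rewrite -big_split; apply: eq_bigr => i _ /=; ring.
have termw : \sum_(m < Ns) cst (ss m + 'X * cs m) * G m =
   \sum_(m < Ns) cst (ss m) * e m + (cst 'X * \sum_(m < Ns) cst (ss m) * NN m +
     (cst 'X * \sum_(m < Ns) cst (cs m) * e m +
     (cst 'X * (cst 'X * \sum_(m < Ns) cst (cs m) * (NN m - H * e m)) -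
      cst 'X * (H * \sum_(m < Ns) cst (ss m) * e m)))).
  apply: etrans (sum_split4 Ns (fun m => cst (ss m) * e m) (fun m => cst (ss m) * NN m)
     (fun m => cst (cs m) * e m) (fun m => cst (cs m) * (NN m - H * e m)) (cst 'X) H).
  by apply: eq_bigr => i _; rewrite /G cstD cstM; ring.
rewrite split termw -eA' -eN' -eW' /W.
have eZ : \sum_(m < Nc) cst (c m) * iter m (nab Dp uL) (zS _ L * A) =
          zS _ L * \sum_(m < Nc) cst (c m) * iter m (nab Dp uL) A.
  rewrite mulr_sumr; apply: eq_bigr => i _; rewrite iter_nab_zS //; ring.
rewrite eZ eB.
set S1 := \sum_(m < Nc) cst (c m) * iter m (nab Dp uL) A.
set S2 := \sum_(m < Ns) cst (cs m) * (NN m - H * e m).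
set S3 := \sum_(m < Ns) cst (ss m + 'X * cs m) * (eT m - G m).
have -> : forall Y, zS _ L * (A + cst 'X * (S1 - H * A)) - (zS _ L * A + (cst 'X * Y +
    (cst 'X * (zS _ L * S1 - Y) + (cst 'X * (cst 'X * S2) - cst 'X * (H * (zS _ L * A))))) + S3) =
    - (cst 'X * (cst 'X * S2)) - S3.
  by move=> Y; ring.
apply: neglB; first by apply: neglN; apply: neglXX.
apply: negl_sum => i; apply: neglM.
exact: (claimT hD hT_eq).
Qed.

Lemma inS_inV (K : comNzRingType) (D : K -> K) (L : int) u a :
  isDer D -> in_S D L u a -> inV D u (zS K L * ofLS (aser a)).
Proof.
move=> hD h.
have e : ofLS (S_lhs L a) = ofLS (S_rhs D L u a) by apply: ser_ext => k; exact: h.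
rewrite /S_lhs ofLS_mul ofLS_Z in e; rewrite e /S_rhs ofLS_add ofLS_big.
apply: inVD; first exact: KPcur_inV.
apply: (@inV_sum _ _ _ _ (fun m => ofLS (ls_scale (a m) (KPcur D u (_ - m))))) => m.
by rewrite ofLS_scale; apply: inVZ; apply: KPcur_inV.
Qed.

Lemma Srhs_inV (K : comNzRingType) (D : K -> K) (L : int) u a :
  isDer D -> inV D u (ofLS (S_rhs D L u a)).
Proof.
move=> hD; rewrite /S_rhs ofLS_add ofLS_big.
apply: inVD; first exact: KPcur_inV.
apply: (@inV_sum _ _ _ _ (fun m => ofLS (ls_scale (a m) (KPcur D u (_ - m))))) => m.
by rewrite ofLS_scale; apply: inVZ; apply: KPcur_inV.
Qed.

Lemma eq2_negl (R : comNzRingType) (F G : LS {poly R}) :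
  negl (ofLS F - ofLS G) -> ls_eq2 F G.
Proof.
move=> h k i i2; have [h0 h1] := h k; rewrite sfB !sf_ofLS coefB in h0; rewrite sfB !sf_ofLS coefB in h1.
case: i i2 => [|[|i]] // _; apply/eqP; rewrite -subr_eq0; apply/eqP => //.
Qed.

Lemma final_L (R : comNzRingType) (D : R -> R) (u a : nat -> R) j (L : int)
   (B : ser {poly R}) Nc (c : nat -> {poly R}) :
  isDer D -> -1 <= L -> in_S D L u a -> vanish (sf B) 0 ->
  B = \sum_(m < Nc) cst (c m) * iter m (nab (map_poly D) (fun i => (u i)%:P)) (ofLS (aser (fun i => (a i)%:P)))
      - ofLS (KPcur (map_poly D) (fun i => (u i)%:P) j) * ofLS (aser (fun i => (a i)%:P)) ->
  ls_eq2 (S_lhs L (fun i => (a i)%:P + sf B (- i%:Z) * 'X))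
         (S_rhs (map_poly D) L (fun i => (u i)%:P + (KPvec D u j i)%:P * 'X)
                (fun i => (a i)%:P + sf B (- i%:Z) * 'X)).
Proof.
move=> hD hL hS vB eB.
have hD' := isDer_map hD.
set Dp := map_poly D.
set uL := fun i => (u i)%:P.
set aL := fun i => (a i)%:P.
set aT := fun i => (a i)%:P + sf B (- i%:Z) * 'X.
set hT := fun i => (u i)%:P + (KPvec D u j i)%:P * 'X.
have hSL := in_S_lift hD hS.
have zAV := inS_inV hD' hSL.
have HV := @KPcur_inV _ Dp uL j hD'.
have hT_eq := hser_T u j hD.
have [N' [cT hm]] := member hD hT_eq HV zAV eB.
have [N3 [d eR]] := Srhs_inV L hT aT hD'.
apply: eq2_negl.
rewrite /S_lhs ofLS_mul ofLS_Z aser_T //.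
set f := zS _ L * (ofLS (aser aL) + cst 'X * B) - ofLS (S_rhs Dp L hT aT).
have : negl (f - \sum_(m < maxn N' N3)
        cst ((if (m < N')%N then cT m else 0) - (if (m < N3)%N then d m else 0)) *
        iter m (nab Dp hT) 1).
  have -> : \sum_(m < maxn N' N3)
        cst ((if (m < N')%N then cT m else 0) - (if (m < N3)%N then d m else 0)) *
        iter m (nab Dp hT) 1 =
     \sum_(m < N') cst (cT m) * iter m (nab Dp hT) 1 - \sum_(m < N3) cst (d m) * iter m (nab Dp hT) 1.
    rewrite (pad_sum _ _ (leq_maxl N' N3)) (pad_sum _ _ (leq_maxr N' N3)) -sumrB.
    by apply: eq_bigr => i _; rewrite cstB mulrBl.
  have -> : f - (\sum_(m < N') cst (cT m) * iter m (nab Dp hT) 1 -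
                 \sum_(m < N3) cst (d m) * iter m (nab Dp hT) 1) =
      (zS _ L * (ofLS (aser aL) + cst 'X * B) - \sum_(m < N') cst (cT m) * iter m (nab Dp hT) 1)
      - (ofLS (S_rhs Dp L hT aT) - \sum_(m < N3) cst (d m) * iter m (nab Dp hT) 1).
    by rewrite /f; ring.
  by rewrite -eR subrr subr0.
move=> Hn.
apply: (@unique_negl _ D hT f (maxn N' N3)
  (fun m => (if (m < N')%N then cT m else 0) - (if (m < N3)%N then d m else 0)) hD Hn).
move=> x x0; rewrite /f -aser_T // -ofLS_Z -ofLS_mul sfB !sf_ofLS.
by rewrite S_coef // subrr; exact: Nid0.
Qed.

Theorem proposition3 (R : comNzRingType) (D : R -> R)
    (D_add : forall x y : R, D (x + y) = D x + D y)
    (D_mul : forall x y : R, D (x * y) = D x * y + x * D y)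
    (l : int) (n : nat) :
  -1 <= l -> (1 <= n)%N ->
  forall u : nat -> R, in_Sp D l n u ->
  forall j : nat, (1 <= j)%N -> KP_tangent D l n j u.
Proof.
move=> l1 n1 u [a [S1 S2]] j j1.
have hD : isDer D := conj D_add D_mul.
have hD' := isDer_map hD.
set uL := fun i => (u i)%:P.
set A := ofLS (aser (fun i => (a i)%:P)).
set H := ofLS (KPcur (map_poly D) uL j).
have vA : vanish (sf A) 1 := vanish_LS _.
have A1 : sf A 1 = 1 by [].
have vHA : vanish (sf (H * A)) (j.+1)%:Z.
  have := vanishM (@KPcur_vanish _ _ uL j hD') vA.
  by rewrite (_ : j%:Z + 1 = j.+1%:Z) //; lia.
have [c hc] := @tri _ _ uL A hD' vA A1 _ _ vHA.
set B := \sum_(m < j.+1) cst (c m) * iter m (nab (map_poly D) uL) A - H * A.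
have vB : vanish (sf B) 0.
  move=> k lk; rewrite /B -opprB sfN hc ?oppr0 //.
exists (fun i => (a i)%:P + sf B (- i%:Z) * 'X).
split.
  exact: (@final_L R D u a j l B j.+1 c hD l1 S1 vB erefl).
have hl : -1 <= l + n%:Z by lia.
exact: (@final_L R D u a j (l + n%:Z) B j.+1 c hD hl S2 vB erefl).
Qed.
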